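(* (1) Soundness: if $\Phi\vdash_I\rho\sqsubseteq\tau$ holds for template types $\rho,\tau$, then $\rho\xi\sqsubseteq_J\tau\xi$ for every model $(J,\xi)$ of $\Phi$. (2) Completeness: if $\rho\xi\sqsubseteq_J\tau\xi$ holds for template types $\rho,\tau$ and a second-order substitution $\xi$, then $\Phi\vdash_I\rho\sqsubseteq\tau$ is derivable for some SOCP $\Phi$, and there exists an extension $\xi'$ of $\xi$, whose domain coincides with the second-order variables occurring in the derivation of $\Phi\vdash_I\rho\sqsubseteq\tau$, such that $(J,\xi')$ is a model of $\Phi$.
   Context: Second-order index terms $a::=i\mid\alpha\mid g(a_1,\dots,a_k)$ over index variables $i$, second-order index variables $\alpha$ and index symbols $g$ (including $0,\mathsf s,+$). An interpretation $J$ maps $k$-ary symbols to total weakly monotone functions $\mathbb N^k\to\mathbb N$ ($0,\mathsf s,+$ standard); $a\le_J b$ iff $[a]^\beta_J\le[b]^\beta_J$ for all assignments $\beta$ (for index terms without second-order variables). An SOCP is a set of inequalities $a\le b$ and occurrence constraints $i\notin\alpha$; a second-order substitution $\xi$ maps second-order variables to index terms without second-order variables; $(J,\xi)$ is a model of $\Phi$ if $a\xi\le_J b\xi$ for all inequalities and $i\notin\mathrm{Var}(\xi(\alpha))$ for all occurrence constraints. Sized types: monotypes $\rho::=B^a\mid\rho_1\times\rho_2\mid\sigma\to\rho$; polytypes $\forall\vec i.\,\sigma\to\rho$; types $\sigma::=\rho\mid$ polytype; a monotype is identified with $\forall\cdot.\rho$; types up to $\alpha$-equivalence; a template type is one whose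 indices may contain second-order variables. $\mathrm{FV}(\sigma)$ is the set of free index variables. Instantiation $\forall\vec i.\tau\sqsupseteq\rho$ iff $\rho=\tau\{\vec i:=\vec a\}$. Subtyping $\sqsubseteq_J$: $B^a\sqsubseteq_J B^b$ if $a\le_J b$; componentwise on products; $\sigma_1\to\rho_1\sqsubseteq_J\sigma_2\to\rho_2$ if $\sigma_2\sqsubseteq_J\sigma_1$ and $\rho_1\sqsubseteq_J\rho_2$; $\forall\vec i.\rho_1\sqsubseteq_J\sigma_2$ if $\sigma_2\sqsupseteq\rho_2$, $\rho_1\sqsubseteq_J\rho_2$, $\vec i\cap\mathrm{FV}(\sigma_2)=\emptyset$. Subtyping inference $\Phi\vdash_I\sigma\sqsubseteq\tau$: $\{a\le b\}\vdash_I B^a\sqsubseteq B^b$; from $\Phi_1\vdash_I\rho_1\sqsubseteq\rho_3$ and $\Phi_2\vdash_I\rho_2\sqsubseteq\rho_4$ infer $\Phi_1\cup\Phi_2\vdash_I\rho_1\times\rho_2\sqsubseteq\rho_3\times\rho_4$; from $\Phi_1\vdash_I\sigma_2\sqsubseteq\sigma_1$ and $\Phi_2\vdash_I\rho_1\sqsubseteq\rho_2$ infer $\Phi_1\cup\Phi_2\vdash_I\sigma_1\to\rho_1\sqsubseteq\sigma_2\to\rho_2$; for fresh second-order variables $\vec\alpha$, from $\Phi\vdash_I\rho_1\sqsubseteq\rho_2\{\vec j:=\vec\alpha\}$ and $\vec i\cap\mathrm{FV}(\forall\vec j.\rho_2)=\emptyset$ infer $\Phi\cup\{\vec i\notin\rho_1\}\cup\{\vec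 i\notin\rho_2\}\vdash_I\forall\vec i.\rho_1\sqsubseteq\forall\vec j.\rho_2$. Here, for index variables $\vec i$ and template types $\vec\rho$, $\vec i\notin\vec\rho$ denotes the set of occurrence constraints $i_k\notin\alpha$ for all $i_k$ in $\vec i$ and all second-order variables $\alpha$ occurring in some $\rho_l$. *)

(* Defs.v *)
From Stdlib Require Import List Arith.
Import ListNotations.

(* Index symbols other than 0, s, + are named by a nat [g]; the arity of an
   occurrence [IApp g ts] is [length ts] (so a k-ary symbol is the pair (g,k)). *)
Inductive iterm : Type :=
| IVar  (i : nat)
| SVar  (a : nat)
| IZero
| ISucc (t : iterm)
| IPlus (t u : iterm)
| IApp  (g : nat) (ts : list iterm).

Fixpoint ivars (t : iterm) : list nat :=
  match t with
  | IVar i => [i]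
  | SVar _ => []
  | IZero => []
  | ISucc t => ivars t
  | IPlus t u => ivars t ++ ivars u
  | IApp _ ts => flat_map ivars ts
  end.

Fixpoint isv (t : iterm) : list nat :=
  match t with
  | IVar _ => []
  | SVar a => [a]
  | IZero => []
  | ISucc t => isv t
  | IPlus t u => isv t ++ isv u
  | IApp _ ts => flat_map isv ts
  end.

Fixpoint isub (th ths : nat -> iterm) (t : iterm) : iterm :=
  match t with
  | IVar i => th i
  | SVar a => ths a
  | IZero => IZero
  | ISucc t => ISucc (isub th ths t)
  | IPlus t u => IPlus (isub th ths t) (isub th ths u)
  | IApp g ts => IApp g (map (isub th ths) ts)
  end.

(* [ifun g] interprets, for every k, the k-ary symbol (g,k) as a total
   function on lists of length k; it is required weakly monotone. *)
Record interp : Type := {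
  ifun : nat -> list nat -> nat;
  ifun_mono : forall g xs ys, Forall2 le xs ys -> ifun g xs <= ifun g ys
}.

Fixpoint ieval (J : interp) (beta : nat -> nat) (t : iterm) : nat :=
  match t with
  | IVar i => beta i
  | SVar _ => 0   (* irrelevant: only used on terms without SO variables *)
  | IZero => 0
  | ISucc t => S (ieval J beta t)
  | IPlus t u => ieval J beta t + ieval J beta u
  | IApp g ts => ifun J g (map (ieval J beta) ts)
  end.

Definition leJ (J : interp) (a b : iterm) : Prop :=
  isv a = [] /\ isv b = [] /\ forall beta, ieval J beta a <= ieval J beta b.

(* [TBase B a] is B^a (B a base-type name); [TAll is r] is forall is. r;
   a monotype r is identified with [TAll [] r]. *)
Inductive mono : Type :=
| TBase (B : nat) (a : iterm)
| TProd (r1 r2 : mono)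
| TArr  (s : ty) (r : mono)
with ty : Type :=
| TAll (is : list nat) (r : mono).

Definition is_arrow (r : mono) : Prop :=
  match r with TArr _ _ => True | _ => False end.

Fixpoint wfm (r : mono) : Prop :=
  match r with
  | TBase _ _ => True
  | TProd r1 r2 => wfm r1 /\ wfm r2
  | TArr s r => wft s /\ wfm r
  end
with wft (s : ty) : Prop :=
  match s with
  | TAll is r => NoDup is /\ (is <> [] -> is_arrow r) /\ wfm r
  end.

Fixpoint mfv (r : mono) : list nat :=
  match r with
  | TBase _ a => ivars a
  | TProd r1 r2 => mfv r1 ++ mfv r2
  | TArr s r => tfv s ++ mfv r
  end
with tfv (s : ty) : list nat :=
  match s with
  | TAll is r => filter (fun x => negb (existsb (Nat.eqb x) is)) (mfv r)
  end.

Fixpoint msv (r : mono) : list nat :=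
  match r with
  | TBase _ a => isv a
  | TProd r1 r2 => msv r1 ++ msv r2
  | TArr s r => tsv s ++ msv r
  end
with tsv (s : ty) : list nat :=
  match s with
  | TAll _ r => msv r
  end.

Fixpoint upd (th : nat -> iterm) (js : list nat) (ts : list iterm) (x : nat)
  : iterm :=
  match js, ts with
  | j :: js', t :: ts' => if Nat.eqb x j then t else upd th js' ts' x
  | _, _ => th x
  end.

(* Capture-avoiding simultaneous substitution on types, as a relation:
   [msubst th ths r r'] means that r' is (an alpha-variant of) the result of
   substituting th for index variables and ths for SO variables in r. *)
Inductive msubst (th ths : nat -> iterm) : mono -> mono -> Prop :=
| ms_base B a : msubst th ths (TBase B a) (TBase B (isub th ths a))
| ms_prod r1 r2 r1' r2' :
    msubst th ths r1 r1' -> msubst th ths r2 r2' ->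
    msubst th ths (TProd r1 r2) (TProd r1' r2')
| ms_arr s r s' r' :
    tsubst th ths s s' -> msubst th ths r r' ->
    msubst th ths (TArr s r) (TArr s' r')
with tsubst (th ths : nat -> iterm) : ty -> ty -> Prop :=
| ts_all is ks r r' :
    length ks = length is ->
    NoDup ks ->
    (forall k x, In k ks -> In x (tfv (TAll is r)) -> ~ In k (ivars (th x))) ->
    (forall k a, In k ks -> In a (msv r) -> ~ In k (ivars (ths a))) ->
    msubst (upd th is (map IVar ks)) ths r r' ->
    tsubst th ths (TAll is r) (TAll ks r').

Definition aeq (s s' : ty) : Prop := tsubst IVar SVar s s'.

Definition inst (s : ty) (r : mono) : Prop :=
  match s with
  | TAll js t => exists as_ : list iterm,
      length as_ = length js /\ msubst (upd IVar js as_) SVar t r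
  end.

Inductive subm (J : interp) : mono -> mono -> Prop :=
| sub_base B a b : leJ J a b -> subm J (TBase B a) (TBase B b)
| sub_prod r1 r2 r3 r4 :
    subm J r1 r3 -> subm J r2 r4 -> subm J (TProd r1 r2) (TProd r3 r4)
| sub_arr s1 r1 s2 r2 :
    subt J s2 s1 -> subm J r1 r2 -> subm J (TArr s1 r1) (TArr s2 r2)
with subt (J : interp) : ty -> ty -> Prop :=
| sub_all is r1 s2 r2 :
    inst s2 r2 -> subm J r1 r2 ->
    (forall i, In i is -> ~ In i (tfv s2)) ->
    subt J (TAll is r1) s2
| sub_alpha s1 s1' s2 s2' :
    aeq s1 s1' -> aeq s2 s2' -> subt J s1' s2' -> subt J s1 s2.

Inductive constr : Type :=
| CLe (a b : iterm)
| CNotIn (i a : nat).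

Definition socp := list constr.

Definition notin_cs (is : list nat) (r : mono) : socp :=
  flat_map (fun i => map (fun a => CNotIn i a) (msv r)) is.

Definition sosubst := nat -> option iterm.

Definition is_sosubst (xi : sosubst) : Prop :=
  forall a t, xi a = Some t -> isv t = [].

Definition xis (xi : sosubst) (a : nat) : iterm :=
  match xi a with Some t => t | None => SVar a end.

Definition model (J : interp) (xi : sosubst) (Phi : socp) : Prop :=
  forall c, In c Phi ->
  match c with
  | CLe a b => leJ J (isub IVar (xis xi) a) (isub IVar (xis xi) b)
  | CNotIn i a => exists t, xi a = Some t /\ ~ In i (ivars t)
  end.

(* The last index V lists the second-order variables occurring in the
   derivation.  Freshness: in binary rules the SO variables of the two
   subderivations may only be shared if they occur in the conclusion. *)
Definition shared_ok (V1 V2 W : list nat) : Prop :=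
  forall a, In a V1 -> In a V2 -> In a W.

Inductive inferm : socp -> mono -> mono -> list nat -> Prop :=
| inf_base B a b :
    inferm [CLe a b] (TBase B a) (TBase B b) (isv a ++ isv b)
| inf_prod Phi1 Phi2 r1 r2 r3 r4 V1 V2 :
    inferm Phi1 r1 r3 V1 -> inferm Phi2 r2 r4 V2 ->
    shared_ok V1 V2 (msv r1 ++ msv r2 ++ msv r3 ++ msv r4) ->
    inferm (Phi1 ++ Phi2) (TProd r1 r2) (TProd r3 r4) (V1 ++ V2)
| inf_arr Phi1 Phi2 s1 r1 s2 r2 V1 V2 :
    infert Phi1 s2 s1 V1 -> inferm Phi2 r1 r2 V2 ->
    shared_ok V1 V2 (tsv s1 ++ msv r1 ++ tsv s2 ++ msv r2) ->
    inferm (Phi1 ++ Phi2) (TArr s1 r1) (TArr s2 r2) (V1 ++ V2)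
with infert : socp -> ty -> ty -> list nat -> Prop :=
| inf_all Phi is r1 js r2 alphas r2' V :
    length alphas = length js ->
    NoDup alphas ->
    (forall a, In a alphas -> ~ In a (msv r1) /\ ~ In a (msv r2)) ->
    msubst (upd IVar js (map SVar alphas)) SVar r2 r2' ->
    inferm Phi r1 r2' V ->
    (forall i, In i is -> ~ In i (tfv (TAll js r2))) ->
    infert (Phi ++ notin_cs is r1 ++ notin_cs is r2)
           (TAll is r1) (TAll js r2) (V ++ msv r1 ++ msv r2)
| inf_alpha Phi s1 s1' s2 s2' V :
    aeq s1 s1' -> aeq s2 s2' -> infert Phi s1' s2' V -> infert Phi s1 s2 V.

(* Main.v *)
Require Import Defs.
From Stdlib Require Import List Arith Lia.
Import ListNotations.


Definition iterm_ind2 (P : iterm -> Prop) (h1: forall i, P (IVar i)) (h2: forall a, P (SVar a)) (h3 : P IZero)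
  (h4 : forall t, P t -> P (ISucc t)) (h5: forall t u, P t -> P u -> P (IPlus t u))
  (h6: forall g ts, Forall P ts -> P (IApp g ts)) : forall t, P t :=
 fix F t := match t with
 | IVar i => h1 i | SVar a => h2 a | IZero => h3 | ISucc t => h4 t (F t)
 | IPlus t u => h5 t u (F t) (F u)
 | IApp g ts => h6 g ts ((fix G ts := match ts return Forall P ts with
      [] => Forall_nil _ | t::ts' => Forall_cons _ (F t) (G ts') end) ts) end.

Lemma isub_comp : forall s ss t ts u,
  isub s ss (isub t ts u) = isub (fun x => isub s ss (t x)) (fun a => isub s ss (ts a)) u.
Proof.
  intros s ss t ts u; induction u using iterm_ind2; simpl; try congruence.
  f_equal. rewrite map_map. apply map_ext_in. intros. rewrite Forall_forall in H. auto.
Qed.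

Lemma isub_ext : forall t ts t' ts' u,
  (forall x, In x (ivars u) -> t x = t' x) -> (forall a, In a (isv u) -> ts a = ts' a) ->
  isub t ts u = isub t' ts' u.
Proof.
  intros t ts t' ts' u; induction u using iterm_ind2; simpl; intros H1 H2.
  - auto. - auto. - auto. - f_equal; auto.
  - f_equal; [apply IHu1|apply IHu2]; intros; (apply H1 || apply H2); apply in_or_app; auto.
  - f_equal. apply map_ext_in. intros v Hv. rewrite Forall_forall in H. apply H; auto;
    intros; (apply H1 || apply H2); apply in_flat_map; eauto.
Qed.

Lemma isub_id : forall u, isub IVar SVar u = u.
Proof.
  induction u using iterm_ind2; simpl; try congruence.
  f_equal. rewrite Forall_forall in H. induction ts; simpl; auto. f_equal; simpl in *; auto.
Qed.

Lemma ivars_isub : forall t ts u y, In y (ivars (isub t ts u)) <->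
  (exists x, In x (ivars u) /\ In y (ivars (t x))) \/ (exists a, In a (isv u) /\ In y (ivars (ts a))).
Proof.
  intros t ts u; induction u using iterm_ind2; simpl; intros y.
  - split; [intros; left; eauto| intros [[x [[<-|[]] H]]|[b [[] _]]]; auto].
  - split; [intros; right; eauto| intros [[x [[] _]]|[b [[<-|[]] H]]]; auto].
  - split; [tauto| intros [[x [[] _]]|[b [[] _]]]].
  - auto.
  - rewrite !in_app_iff, IHu1, IHu2. split.
    + intros [[[x [? ?]]|[a [? ?]]]|[[x [? ?]]|[a [? ?]]]]; eauto 6 using in_or_app.
    + intros [[x [Hx ?]]|[a [Ha ?]]]; apply in_app_or in Hx || apply in_app_or in Ha;
      firstorder.
  - rewrite in_flat_map. rewrite Forall_forall in H. split.
    + intros [v [Hv Hy]]. apply in_map_iff in Hv. destruct Hv as [w [<- Hw]].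
      apply H in Hy; auto. destruct Hy as [[x [? ?]]|[a [? ?]]]; [left|right];
      exists x || exists a; split; auto; apply in_flat_map; eauto.
    + intros [[x [Hx ?]]|[a [Ha ?]]]; apply in_flat_map in Hx || apply in_flat_map in Ha;
      [destruct Hx as [w [Hw Hx]]|destruct Ha as [w [Hw Ha]]];
      exists (isub t ts w); (split; [apply in_map; auto| apply H; eauto]).
Qed.

Lemma isv_isub : forall t ts u y, In y (isv (isub t ts u)) <->
  (exists x, In x (ivars u) /\ In y (isv (t x))) \/ (exists a, In a (isv u) /\ In y (isv (ts a))).
Proof.
  intros t ts u; induction u using iterm_ind2; simpl; intros y.
  - split; [intros; left; eauto| intros [[x [[<-|[]] H]]|[b [[] _]]]; auto].
  - split; [intros; right; eauto| intros [[x [[] _]]|[b [[<-|[]] H]]]; auto].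
  - split; [tauto| intros [[x [[] _]]|[b [[] _]]]].
  - auto.
  - rewrite !in_app_iff, IHu1, IHu2. split.
    + intros [[[x [? ?]]|[a [? ?]]]|[[x [? ?]]|[a [? ?]]]]; eauto 6 using in_or_app.
    + intros [[x [Hx ?]]|[a [Ha ?]]]; apply in_app_or in Hx || apply in_app_or in Ha;
      firstorder.
  - rewrite in_flat_map. rewrite Forall_forall in H. split.
    + intros [v [Hv Hy]]. apply in_map_iff in Hv. destruct Hv as [w [<- Hw]].
      apply H in Hy; auto. destruct Hy as [[x [? ?]]|[a [? ?]]]; [left|right];
      exists x || exists a; split; auto; apply in_flat_map; eauto.
    + intros [[x [Hx ?]]|[a [Ha ?]]]; apply in_flat_map in Hx || apply in_flat_map in Ha;
      [destruct Hx as [w [Hw Hx]]|destruct Ha as [w [Hw Ha]]];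
      exists (isub t ts w); (split; [apply in_map; auto| apply H; eauto]).
Qed.

Lemma upd_map : forall (F : iterm -> iterm) th js ts x,
  F (upd th js ts x) = upd (fun y => F (th y)) js (map F ts) x.
Proof. intros F th js; induction js; destruct ts; intros; simpl; auto. destruct (x =? a); auto. Qed.

Lemma upd_notin : forall th js ts x, ~ In x js -> upd th js ts x = th x.
Proof.
  intros th js; induction js; destruct ts; simpl; intros; auto.
  destruct (Nat.eqb_spec x a); [exfalso; auto|]. apply IHjs; auto.
Qed.

Lemma upd_ext_out : forall th th' js ts x, length ts = length js ->
  (~ In x js -> th x = th' x) -> upd th js ts x = upd th' js ts x.
Proof.
  intros th th' js; induction js; destruct ts; simpl; intros; auto; try discriminate.
  destruct (Nat.eqb_spec x a); auto. apply IHjs; auto.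
  intro; apply H0; intros [|]; auto.
Qed.

Lemma upd_self : forall th ks vs, NoDup ks -> length vs = length ks -> map (upd th ks vs) ks = vs.
Proof.
  intros th ks; induction ks; destruct vs; simpl; intros; auto; try discriminate.
  rewrite Nat.eqb_refl. f_equal. inversion H; subst.
  transitivity (map (upd th ks vs) ks); [|apply IHks; auto]. apply map_ext_in. intros x Hx.
  destruct (Nat.eqb_spec x a); subst; [contradiction|auto].
Qed.

Lemma upd_id_in : forall f js x, In x js -> upd f js (map IVar js) x = IVar x.
Proof.
  intros f js; induction js; simpl; intros x H; [destruct H|].
  destruct (Nat.eqb_spec x a); subst; auto. apply IHjs. destruct H; auto. congruence.
Qed.

Lemma upd_IVar_self : forall js x, upd IVar js (map IVar js) x = IVar x.
Proof.
  intros. destruct (in_dec Nat.eq_dec x js). apply upd_id_in; auto. apply upd_notin; auto.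
Qed.

Lemma upd_in_range : forall th js ts x, In x js -> length ts = length js -> In (upd th js ts x) ts.
Proof.
  intros th js; induction js; destruct ts; simpl; intros; try discriminate; [destruct H|].
  destruct (Nat.eqb_spec x a); auto. right; apply IHjs; auto. destruct H; auto; congruence.
Qed.

Lemma In_tfv : forall y is r, In y (tfv (TAll is r)) <-> In y (mfv r) /\ ~ In y is.
Proof.
  intros. simpl. rewrite filter_In. rewrite Bool.negb_true_iff.
  split; intros [H1 H2]; split; auto.
  - intro Hin. assert (existsb (Nat.eqb y) is = true) by (apply existsb_exists; exists y; split; auto; apply Nat.eqb_refl). congruence.
  - destruct (existsb (Nat.eqb y) is) eqn:E; auto. apply existsb_exists in E.
    destruct E as [z [Hz E]]. apply Nat.eqb_eq in E; subst; contradiction.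
Qed.

Scheme msubst_min := Minimality for msubst Sort Prop
  with tsubst_min := Minimality for tsubst Sort Prop.
Combined Scheme msubst_mut0 from msubst_min, tsubst_min.

Lemma msubst_mut : forall (P : (nat -> iterm) -> (nat -> iterm) -> mono -> mono -> Prop)
         (P0 : (nat -> iterm) -> (nat -> iterm) -> ty -> ty -> Prop),
       (forall (th ths : nat -> iterm) (B : nat) (a : iterm),
        P th ths (TBase B a) (TBase B (isub th ths a))) ->
       (forall (th ths : nat -> iterm) (r1 r2 r1' r2' : mono),
        msubst th ths r1 r1' -> P th ths r1 r1' -> msubst th ths r2 r2' ->
        P th ths r2 r2' -> P th ths (TProd r1 r2) (TProd r1' r2')) ->
       (forall (th ths : nat -> iterm) (s : ty) (r : mono) (s' : ty) (r' : mono),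
        tsubst th ths s s' -> P0 th ths s s' -> msubst th ths r r' ->
        P th ths r r' -> P th ths (TArr s r) (TArr s' r')) ->
       (forall (th ths : nat -> iterm) (is ks : list nat) (r r' : mono),
        length ks = length is -> NoDup ks ->
        (forall k x : nat, In k ks -> In x (tfv (TAll is r)) -> ~ In k (ivars (th x))) ->
        (forall k a : nat, In k ks -> In a (msv r) -> ~ In k (ivars (ths a))) ->
        msubst (upd th is (map IVar ks)) ths r r' ->
        P (upd th is (map IVar ks)) ths r r' ->
        P0 th ths (TAll is r) (TAll ks r')) ->
       (forall th ths r r', msubst th ths r r' -> P th ths r r') /\
       (forall th ths s s', tsubst th ths s s' -> P0 th ths s s').
Proof. intros P P0 H1 H2 H3 H4; split; intros th ths.
  - intros r r' H; exact (proj1 (msubst_mut0 P P0 H1 H2 H3 H4 th ths) r r' H).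
  - intros r r' H; exact (proj2 (msubst_mut0 P P0 H1 H2 H3 H4 th ths) r r' H). Qed.

Lemma upd_ks : forall th is ks x, In x is -> length ks = length is ->
  exists k, In k ks /\ upd th is (map IVar ks) x = IVar k.
Proof.
  intros. assert (In (upd th is (map IVar ks) x) (map IVar ks)).
  apply upd_in_range; auto. rewrite length_map; auto.
  apply in_map_iff in H1. destruct H1 as [k [E Hk]]. eauto.
Qed.

Lemma fv_sub :
  (forall th ths r r', msubst th ths r r' ->
    (forall y, In y (mfv r') <-> (exists x, In x (mfv r) /\ In y (ivars (th x))) \/
                                  (exists a, In a (msv r) /\ In y (ivars (ths a)))) /\
    (forall y, In y (msv r') <-> (exists x, In x (mfv r) /\ In y (isv (th x))) \/
                                  (exists a, In a (msv r) /\ In y (isv (ths a))))) /\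
  (forall th ths s s', tsubst th ths s s' ->
    (forall y, In y (tfv s') <-> (exists x, In x (tfv s) /\ In y (ivars (th x))) \/
                                  (exists a, In a (tsv s) /\ In y (ivars (ths a)))) /\
    (forall y, In y (tsv s') <-> (exists x, In x (tfv s) /\ In y (isv (th x))) \/
                                  (exists a, In a (tsv s) /\ In y (isv (ths a))))).
Proof.
  apply msubst_mut; intros.
  - simpl. split; intros; [apply ivars_isub|apply isv_isub].
  - simpl. destruct H0 as [A1 A2]; destruct H2 as [B1 B2].
    split; intros y; rewrite !in_app_iff; [rewrite A1, B1|rewrite A2, B2];
    setoid_rewrite in_app_iff; firstorder.
  - simpl. destruct H0 as [A1 A2]; destruct H2 as [B1 B2].
    split; intros y; rewrite !in_app_iff; [rewrite A1, B1|rewrite A2, B2];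
    setoid_rewrite in_app_iff; firstorder.
  - cbn [tsv]. destruct H4 as [A1 A2]. split; intros y.
    + rewrite In_tfv, A1. split.
      * intros [[[x [Hx Hy]]|[a [Ha Hy]]] Hn].
        -- destruct (in_dec Nat.eq_dec x is).
           ++ destruct (upd_ks th is ks x i H) as [k [Hk E]]. rewrite E in Hy.
              destruct Hy as [<-|[]]. contradiction.
           ++ rewrite upd_notin in Hy by auto. left. exists x. rewrite In_tfv. auto.
        -- right; eauto.
      * intros [[x [Hx Hy]]|[a [Ha Hy]]].
        -- pose proof Hx as Hx'. rewrite In_tfv in Hx'. destruct Hx'.
           split. left. exists x. rewrite upd_notin; auto.
           intro Hk. eapply H1; eauto.
        -- split. right; eauto. intro Hk. eapply H2; eauto.
    + rewrite A2. split.
      * intros [[x [Hx Hy]]|[a [Ha Hy]]].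
        -- destruct (in_dec Nat.eq_dec x is).
           ++ destruct (upd_ks th is ks x i H) as [k [Hk E]]. rewrite E in Hy. destruct Hy.
           ++ rewrite upd_notin in Hy by auto. left. exists x. rewrite In_tfv. auto.
        -- right; eauto.
      * intros [[x [Hx Hy]]|[a [Ha Hy]]].
        -- rewrite In_tfv in Hx. destruct Hx. left. exists x. rewrite upd_notin; auto.
        -- right; eauto.
Qed.

Lemma sub_ext :
  (forall th ths r r', msubst th ths r r' -> forall th' ths',
    (forall x, In x (mfv r) -> th x = th' x) -> (forall a, In a (msv r) -> ths a = ths' a) ->
    msubst th' ths' r r') /\
  (forall th ths s s', tsubst th ths s s' -> forall th' ths',
    (forall x, In x (tfv s) -> th x = th' x) -> (forall a, In a (tsv s) -> ths a = ths' a) ->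
    tsubst th' ths' s s').
Proof.
  apply msubst_mut; intros.
  - simpl in *. rewrite (isub_ext th ths th' ths'); auto. constructor.
  - simpl in *. constructor; [apply H0|apply H2]; intros; auto using in_or_app.
  - simpl in *. constructor; [apply H0|apply H2]; intros; auto using in_or_app.
  - cbn [tsv] in *. constructor; auto.
    + intros k x Hk Hx. rewrite <- H5; auto.
    + intros k a Hk Ha. rewrite <- H6; auto.
    + apply H4; auto. intros x Hx. apply upd_ext_out. rewrite length_map; auto.
      intros Hn. apply H5. apply In_tfv; auto.
Qed.

Definition msubst_ext := proj1 sub_ext.
Definition tsubst_ext := proj2 sub_ext.

Definition fvm := fun th ths r r' (H : msubst th ths r r') => proj1 (proj1 fv_sub th ths r r' H).
Definition svm := fun th ths r r' (H : msubst th ths r r') => proj2 (proj1 fv_sub th ths r r' H).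
Definition fvt := fun th ths r r' (H : tsubst th ths r r') => proj1 (proj2 fv_sub th ths r r' H).
Definition svt := fun th ths r r' (H : tsubst th ths r r') => proj2 (proj2 fv_sub th ths r r' H).

Definition cth (th2 ths2 th1 : nat -> iterm) := fun x => isub th2 ths2 (th1 x).

Lemma sub_comp :
  (forall th1 ths1 r r1, msubst th1 ths1 r r1 -> forall th2 ths2 r2, msubst th2 ths2 r1 r2 ->
    msubst (cth th2 ths2 th1) (cth th2 ths2 ths1) r r2) /\
  (forall th1 ths1 s s1, tsubst th1 ths1 s s1 -> forall th2 ths2 s2, tsubst th2 ths2 s1 s2 ->
    tsubst (cth th2 ths2 th1) (cth th2 ths2 ths1) s s2).
Proof.
  apply msubst_mut; intros.
  - inversion H; subst. unfold cth. rewrite isub_comp. constructor.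
  - inversion H3; subst. constructor; eauto.
  - inversion H3; subst. constructor; eauto.
  - inversion H5; subst. rename ks0 into ks2. rename r'0 into r2'.
    constructor; auto; try congruence.
    + intros k x Hk Hx. unfold cth. rewrite ivars_isub.
      intros [[y [Hy Hk']]|[b [Hb Hk']]].
      * eapply H10; eauto. apply (fvt _ _ _ _ (ts_all _ _ _ _ _ _ H H0 H1 H2 H3)). left; eauto.
      * eapply H11; eauto.
        apply (svt _ _ _ _ (ts_all _ _ _ _ _ _ H H0 H1 H2 H3)). left; eauto.
    + intros k a Hk Ha. unfold cth. rewrite ivars_isub.
      intros [[y [Hy Hk']]|[b [Hb Hk']]].
      * eapply H10; eauto. apply (fvt _ _ _ _ (ts_all _ _ _ _ _ _ H H0 H1 H2 H3)). right; eauto.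
      * eapply H11; eauto.
        apply (svt _ _ _ _ (ts_all _ _ _ _ _ _ H H0 H1 H2 H3)). right; eauto.
    + specialize (H4 _ _ _ H13). eapply msubst_ext; [exact H4| |].
      * intros x Hx. unfold cth. rewrite upd_map. simpl.
        rewrite map_map. simpl.
        rewrite upd_self; auto; [|rewrite length_map; congruence].
        apply upd_ext_out; [rewrite length_map; congruence|]. intros Hn.
        apply isub_ext; auto. intros y Hy. apply upd_notin. intros Hk.
        eapply H1; eauto. apply In_tfv; auto.
      * intros a Ha. unfold cth. apply isub_ext; auto. intros y Hy. apply upd_notin.
        intros Hk. eapply H2; eauto.
Qed.

Lemma sub_fact :
  (forall th ths r r1, msubst th ths r r1 -> forall th' ths' r2, msubst th' ths' r r2 ->
    forall sg sgs, (forall x, In x (mfv r) -> th' x = isub sg sgs (th x)) ->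
    (forall a, In a (msv r) -> ths' a = isub sg sgs (ths a)) -> msubst sg sgs r1 r2) /\
  (forall th ths s s1, tsubst th ths s s1 -> forall th' ths' s2, tsubst th' ths' s s2 ->
    forall sg sgs, (forall x, In x (tfv s) -> th' x = isub sg sgs (th x)) ->
    (forall a, In a (tsv s) -> ths' a = isub sg sgs (ths a)) -> tsubst sg sgs s1 s2).
Proof.
  apply msubst_mut; intros.
  - inversion H; subst. simpl in *.
    replace (isub th' ths' a) with (isub sg sgs (isub th ths a)); [constructor|].
    rewrite isub_comp. symmetry. apply isub_ext; auto.
  - inversion H3; subst. simpl in *. constructor; [eapply H0|eapply H2]; eauto;
      intros; (apply H4 || apply H5); auto using in_or_app.
  - inversion H3; subst. simpl in *. constructor; [eapply H0|eapply H2]; eauto;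
      intros; (apply H4 || apply H5); auto using in_or_app.
  - inversion H5; subst. rename ks0 into ks2. rename r'0 into r2'.
    pose proof (ts_all _ _ _ _ _ _ H H0 H1 H2 H3) as T1.
    constructor; auto; try congruence.
    + intros k y Hk Hy Hk'. apply (fvt _ _ _ _ T1) in Hy.
      destruct Hy as [[x [Hx Hy]]|[a [Ha Hy]]].
      * apply (H12 k x Hk Hx). rewrite H6 by auto.
        apply ivars_isub. left; eauto.
      * apply (H13 k a Hk Ha). rewrite H7 by auto. apply ivars_isub. left; eauto.
    + intros k b Hk Hb Hk'. apply (svt _ _ _ _ T1) in Hb.
      destruct Hb as [[x [Hx Hy]]|[a [Ha Hy]]].
      * apply (H12 k x Hk Hx). rewrite H6 by auto.
        apply ivars_isub. right; eauto.
      * apply (H13 k a Hk Ha). rewrite H7 by auto. apply ivars_isub. right; eauto.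
    + eapply H4; [exact H15| |].
      * intros x Hx. rewrite upd_map. rewrite map_map. simpl.
        rewrite upd_self; auto; [|rewrite length_map; congruence].
        apply upd_ext_out; [rewrite length_map; congruence|]. intros Hn.
        assert (Hx' : In x (tfv (TAll is r))) by (apply In_tfv; auto).
        rewrite H6 by auto.
        apply isub_ext; auto. intros y Hy. symmetry. apply upd_notin. intros Hk.
        eapply H1; eauto.
      * intros a Ha. rewrite H7 by auto. apply isub_ext; auto. intros y Hy. symmetry.
        apply upd_notin. intros Hk. eapply H2; eauto.
Qed.

Definition msubst_fact := proj1 sub_fact.
Definition tsubst_fact := proj2 sub_fact.
Definition msubst_comp := proj1 sub_comp.
Definition tsubst_comp := proj2 sub_comp.

Scheme mono_ind' := Induction for mono Sort Prop with ty_ind' := Induction for ty Sort Prop.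
Combined Scheme mono_mut from mono_ind', ty_ind'.

Lemma fresh_list : forall L n N, exists ks, length ks = n /\ NoDup ks /\
  (forall k, In k ks -> ~ In k L /\ N <= k).
Proof.
  intros. exists (seq (S (list_max L) + N) n). split; [apply length_seq|]. split; [apply seq_NoDup|].
  intros k Hk. apply in_seq in Hk. split; [|lia]. intros HL.
  assert (k <= list_max L). { pose proof (proj1 (list_max_le L (list_max L)) (le_n _)).
    rewrite Forall_forall in H. auto. } lia.
Qed.

Lemma sub_exists :
  (forall r th ths, exists r', msubst th ths r r') /\
  (forall s th ths, exists s', tsubst th ths s s').
Proof.
  apply mono_mut; intros.
  - eexists; constructor.
  - destruct (H th ths) as [a Ha]; destruct (H0 th ths) as [b Hb]. eexists; constructor; eauto.
  - destruct (H th ths) as [a Ha]; destruct (H0 th ths) as [b Hb]. eexists; constructor; eauto.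
  - destruct (fresh_list (flat_map (fun x => ivars (th x)) (tfv (TAll is r)) ++
       flat_map (fun a => ivars (ths a)) (msv r)) (length is) 0) as [ks [L1 [L2 L3]]].
    destruct (H (upd th is (map IVar ks)) ths) as [r' Hr]. exists (TAll ks r').
    constructor; auto.
    + intros k x Hk Hx Hk'. apply (L3 k Hk). apply in_or_app; left. apply in_flat_map; eauto.
    + intros k x Hk Hx Hk'. apply (L3 k Hk). apply in_or_app; right. apply in_flat_map; eauto.
Qed.

Definition msubst_ex := proj1 sub_exists.
Definition tsubst_ex := proj2 sub_exists.

Lemma sub_wf :
  (forall th ths r r', msubst th ths r r' -> wfm r -> wfm r') /\
  (forall th ths s s', tsubst th ths s s' -> wft s -> wft s').
Proof.
  apply msubst_mut; simpl; intros; try tauto.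
  destruct H5 as [? [? ?]]. split; auto. split; auto.
  intros Hks. assert (is <> []) by (intro; subst; destruct ks; simpl in *; congruence).
  specialize (H6 H8). inversion H3; subst; simpl in *; auto.
Qed.

Lemma sub_refl :
  (forall r, wfm r -> msubst IVar SVar r r) /\
  (forall s, wft s -> tsubst IVar SVar s s).
Proof.
  apply mono_mut; intros.
  - assert (Hb : msubst IVar SVar (TBase B a) (TBase B (isub IVar SVar a))) by constructor. rewrite isub_id in Hb. exact Hb.
  - simpl in *; constructor; tauto.
  - simpl in *; constructor; tauto.
  - destruct H0 as [? [? ?]]. apply ts_all; auto.
    + intros k x Hk Hx [E|[]]; subst. apply In_tfv in Hx. tauto.
    + eapply msubst_ext; [apply H; auto| |]; auto. intros x _. rewrite upd_IVar_self; auto.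
Qed.

Lemma aeq_trans : forall s1 s2 s3, aeq s1 s2 -> aeq s2 s3 -> aeq s1 s3.
Proof.
  unfold aeq; intros. pose proof (tsubst_comp _ _ _ _ H _ _ _ H0).
  eapply tsubst_ext; [exact H1| |]; intros; unfold cth; simpl; auto.
Qed.

Lemma tsubst_aeq : forall th ths s s1 s2, tsubst th ths s s1 -> aeq s1 s2 -> tsubst th ths s s2.
Proof.
  unfold aeq; intros. pose proof (tsubst_comp _ _ _ _ H _ _ _ H0).
  eapply tsubst_ext; [exact H1| |]; intros; unfold cth; apply isub_id.
Qed.

Lemma tsubst_uniq : forall th ths s s1 s2, tsubst th ths s s1 -> tsubst th ths s s2 -> aeq s1 s2.
Proof.
  unfold aeq; intros. eapply tsubst_fact; eauto; intros; rewrite isub_id; auto.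
Qed.

Scheme inferm_min := Minimality for inferm Sort Prop
  with infert_min := Minimality for infert Sort Prop.
Combined Scheme infer_mut from inferm_min, infert_min.

Lemma model_app : forall J xi P1 P2, model J xi (P1 ++ P2) -> model J xi P1 /\ model J xi P2.
Proof. unfold model; intros; split; intros; apply H; apply in_or_app; auto. Qed.

Lemma in_notin_cs : forall i a is r, In i is -> In a (msv r) -> In (CNotIn i a) (notin_cs is r).
Proof. intros. unfold notin_cs. apply in_flat_map. exists i; split; auto. apply in_map; auto. Qed.

Lemma model_notin : forall J xi is r i a, model J xi (notin_cs is r) -> In i is -> In a (msv r) ->
  ~ In i (ivars (xis xi a)).
Proof.
  intros. specialize (H _ (in_notin_cs i a is r H0 H1)). simpl in H.
  destruct H as [t [E H]]. unfold xis; rewrite E; auto.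
Qed.

Lemma tsubst_wf : forall th ths s s', tsubst th ths s s' -> wft s -> wft s'.
Proof. intros. eapply (proj2 sub_wf); eauto. Qed.
Lemma msubst_wf : forall th ths s s', msubst th ths s s' -> wfm s -> wfm s'.
Proof. intros. eapply (proj1 sub_wf); eauto. Qed.

Lemma soundness_mut :
  (forall Phi r1 r2 V, inferm Phi r1 r2 V -> wfm r1 -> wfm r2 -> forall J xi, model J xi Phi ->
    forall r1' r2', msubst IVar (xis xi) r1 r1' -> msubst IVar (xis xi) r2 r2' -> subm J r1' r2') /\
  (forall Phi s1 s2 V, infert Phi s1 s2 V -> wft s1 -> wft s2 -> forall J xi, model J xi Phi ->
    forall s1' s2', tsubst IVar (xis xi) s1 s1' -> tsubst IVar (xis xi) s2 s2' -> subt J s1' s2').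
Proof.
  apply infer_mut.
  - intros B a b W1 W2 J xi Hm r1' r2' S1 S2.
    inversion S1; inversion S2; subst. constructor.
    apply (Hm (CLe a b)). left; auto.
  - intros Phi1 Phi2 r1 r2 r3 r4 V1 V2 D1 IH1 D2 IH2 Hsh W1 W2 J xi Hm r1' r2' S1 S2.
    simpl in *. apply model_app in Hm. inversion S1; inversion S2; subst.
    destruct W1, W2, Hm; constructor; [eapply IH1|eapply IH2]; eauto.
  - intros Phi1 Phi2 s1 r1 s2 r2 V1 V2 D1 IH1 D2 IH2 Hsh W1 W2 J xi Hm r1' r2' S1 S2.
    simpl in *. apply model_app in Hm. inversion S1; inversion S2; subst.
    destruct W1, W2, Hm; constructor; [eapply IH1|eapply IH2]; eauto.
  -
    intros Phi is r1 js r2 alphas r2' V Hlen Hnd Hfr H2 D H4 H5 Hw1 Hw2 J xi Hm s1' s2' Hrho Htau.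
    rename H5 into Hside.
    apply model_app in Hm. destruct Hm as [Hm Hm']. apply model_app in Hm'. destruct Hm' as [Hn1 Hn2].
    destruct Hw1 as [ND1 [Ar1 Hw1]]. destruct Hw2 as [ND2 [Ar2 Hw2]].
    destruct (msubst_ex r1 IVar (xis xi)) as [r1x Hr1x].
    inversion Hrho; subst. rename r' into r1p. rename H5 into Hf1. rename H6 into Hf2. rename H8 into Hr1p. rename H1 into Lk. rename H3 into NDk.
    apply sub_alpha with (s1' := TAll is r1x) (s2' := s2').
    + apply ts_all; auto; try congruence.
      * intros k y Hk Hy E. simpl in E. destruct E as [E|[]]; subst.
        apply (fvt _ _ _ _ Hrho) in Hy. destruct Hy as [[x [Hx Hy]]|[a [Ha Hy]]].
        -- simpl in Hy. destruct Hy as [E|[]]; subst. apply In_tfv in Hx. tauto.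
        -- exact (model_notin _ _ _ _ _ _ Hn1 Hk Ha Hy).
      * eapply msubst_fact; [exact Hr1p|exact Hr1x| |].
        -- intros x Hx. rewrite upd_map. rewrite map_map. simpl.
           rewrite upd_self; auto.
           destruct (in_dec Nat.eq_dec x is). rewrite upd_id_in; auto.
           rewrite upd_notin; auto. rewrite upd_notin; auto. intros Hk.
           apply (Hf1 x x Hk). apply In_tfv; auto. simpl; auto. rewrite length_map; auto.
        -- intros a Ha. rewrite <- (isub_id (xis xi a)) at 1. apply isub_ext; auto.
           intros y Hy. rewrite upd_notin; auto. intros Hk. eapply Hf2; eauto.
    + apply (proj2 sub_refl). eapply tsubst_wf; [exact Htau|]. simpl; auto.
    + inversion Htau; subst. rename ks0 into ks2. rename r' into r2t. rename H5 into Hg1. rename H6 into Hg2. rename H8 into Hr2t. rename H1 into Lk2. rename H3 into NDk2.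
        destruct (msubst_ex r2t (upd IVar ks2 (map (xis xi) alphas)) SVar) as [R HR].
      apply sub_all with (r2 := R).
      * simpl. exists (map (xis xi) alphas). split; auto. rewrite length_map; congruence.
      * apply (H4 Hw1 (msubst_wf _ _ _ _ H2 Hw2) J xi Hm r1x R Hr1x).
        pose proof (msubst_comp _ _ _ _ Hr2t _ _ _ HR) as HC.
        eapply msubst_fact; [exact H2|exact HC| |].
        -- intros x Hx. unfold cth. rewrite !upd_map. rewrite !map_map. simpl.
           rewrite upd_self; auto; [|rewrite length_map; congruence].
           apply upd_ext_out. rewrite length_map; auto. intros Hn.
           apply upd_notin. intros Hk. apply (Hg1 x x Hk). apply In_tfv; auto. simpl; auto.
        -- intros a Ha. unfold cth. simpl. rewrite <- (isub_id (xis xi a)) at 2.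
           apply isub_ext; auto. intros y Hy. apply upd_notin. intros Hk. eapply Hg2; eauto.
      * intros i Hi Ht. apply (fvt _ _ _ _ Htau) in Ht.
        destruct Ht as [[x [Hx Hy]]|[a [Ha Hy]]].
        -- simpl in Hy. destruct Hy as [E|[]]; subst. eapply Hside; eauto.
        -- exact (model_notin _ _ _ _ _ _ Hn2 Hi Ha Hy).
  -
    intros Phi s1 s1' s2 s2' V H H0 D H2 Y1 Y2 J xi Hm t1 t2 H6 H7.
    assert (W1 : wft s1') by (eapply tsubst_wf; eauto).
    assert (W2 : wft s2') by (eapply tsubst_wf; eauto).
    destruct (tsubst_ex s1' IVar (xis xi)) as [rho1 R1].
    destruct (tsubst_ex s2' IVar (xis xi)) as [tau1 T1].
    apply sub_alpha with (s1' := rho1) (s2' := tau1); [| |eapply H2; eauto].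
    + eapply tsubst_uniq; [exact H6|].
      pose proof (tsubst_comp _ _ _ _ H _ _ _ R1) as H8. eapply tsubst_ext; [exact H8| |]; intros; reflexivity.
    + eapply tsubst_uniq; [exact H7|].
      pose proof (tsubst_comp _ _ _ _ H0 _ _ _ T1) as H8. eapply tsubst_ext; [exact H8| |]; intros; reflexivity.
Qed.

Scheme subm_min := Minimality for subm Sort Prop with subt_min := Minimality for subt Sort Prop.
Combined Scheme sub_mut from subm_min, subt_min.

Lemma nosv : forall J,
  (forall r1 r2, subm J r1 r2 -> (forall a, ~ In a (msv r1)) /\ (forall a, ~ In a (msv r2))) /\
  (forall s1 s2, subt J s1 s2 -> (forall a, ~ In a (tsv s1)) /\ (forall a, ~ In a (tsv s2))).
Proof.
  intros J; apply sub_mut; intros.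
  - destruct H as [E1 [E2 _]]. simpl. rewrite E1, E2. simpl; auto.
  - simpl. destruct H0, H2. split; intros a Ha; apply in_app_or in Ha; firstorder.
  - simpl. destruct H0, H2. split; intros a Ha; apply in_app_or in Ha; firstorder.
  - destruct H1. split; [exact H1|]. destruct s2 as [js t]. simpl in H.
    destruct H as [as_ [_ Hm]]. intros a Ha. apply (H3 a).
    apply (svm _ _ _ _ Hm). right. exists a. split; simpl; auto.
  - destruct H2. split; intros a Ha.
    + apply (H2 a). apply (svt _ _ _ _ H). right. exists a; simpl; auto.
    + apply (H3 a). apply (svt _ _ _ _ H0). right. exists a; simpl; auto.
Qed.

Lemma defined_all : forall th xi r r', msubst th (xis xi) r r' -> (forall a, ~ In a (msv r')) ->
  forall a, In a (msv r) -> xi a <> None.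
Proof.
  intros. intro E. apply (H0 a). apply (svm _ _ _ _ H). right. exists a. split; auto.
  unfold xis; rewrite E; simpl; auto.
Qed.

Definition cvars (c : constr) : list nat :=
  match c with CLe a b => isv a ++ isv b | CNotIn _ a => [a] end.

Lemma in_notin_cs_inv : forall c is r, In c (notin_cs is r) ->
  exists i a, c = CNotIn i a /\ In i is /\ In a (msv r).
Proof.
  unfold notin_cs. intros. apply in_flat_map in H. destruct H as [i [Hi H]].
  apply in_map_iff in H. destruct H as [a [<- Ha]]. eauto.
Qed.

Lemma aeq_tsv : forall s s', aeq s s' -> forall a, In a (tsv s) <-> In a (tsv s').
Proof.
  intros. split; intros.
  - apply (svt _ _ _ _ H). right. exists a; simpl; auto.
  - apply (svt _ _ _ _ H) in H0. destruct H0 as [[x [_ []]]|[b [Hb [<-|[]]]]]; auto.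
Qed.

Lemma infer_V :
  (forall Phi r1 r2 V, inferm Phi r1 r2 V ->
     (forall a, In a (msv r1) \/ In a (msv r2) -> In a V) /\
     (forall c, In c Phi -> forall a, In a (cvars c) -> In a V)) /\
  (forall Phi s1 s2 V, infert Phi s1 s2 V ->
     (forall a, In a (tsv s1) \/ In a (tsv s2) -> In a V) /\
     (forall c, In c Phi -> forall a, In a (cvars c) -> In a V)).
Proof.
  apply infer_mut.
  - intros B a b. split; intros. simpl in *. apply in_or_app; tauto.
    destruct H as [<-|[]]. auto.
  - intros Phi1 Phi2 r1 r2 r3 r4 V1 V2 _ [A1 A2] _ [B1 B2] _. split; intros a; simpl.
    + rewrite !in_app_iff. intros Ha. firstorder.
    + intros Ha b Hb. apply in_app_or in Ha. apply in_or_app. firstorder.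
  - intros Phi1 Phi2 r1 r2 r3 r4 V1 V2 _ [A1 A2] _ [B1 B2] _. split; intros a; simpl.
    + rewrite !in_app_iff. intros Ha. firstorder.
    + intros Ha b Hb. apply in_app_or in Ha. apply in_or_app. firstorder.
  - intros Phi is r1 js r2 alphas r2' V H H0 H1 H2 H3 H4 H5.
    destruct H4. split; intros.
    + simpl in H7. rewrite !in_app_iff. tauto.
    + rewrite !in_app_iff in H7. destruct H7 as [H7|[H7|H7]].
      * apply in_or_app; left; eauto.
      * apply in_notin_cs_inv in H7. destruct H7 as [i [b [-> [_ Hb]]]].
        simpl in H8. destruct H8 as [<-|[]]. rewrite !in_app_iff; tauto.
      * apply in_notin_cs_inv in H7. destruct H7 as [i [b [-> [_ Hb]]]].
        simpl in H8. destruct H8 as [<-|[]]. rewrite !in_app_iff; tauto.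
  - intros Phi s1 s1' s2 s2' V H H0 H1 H2. destruct H2. split; auto. intros. apply H2.
    rewrite <- (aeq_tsv _ _ H a), <- (aeq_tsv _ _ H0 a). auto.
Qed.

Lemma model_ext : forall J xi xi' Phi, model J xi Phi ->
  (forall c, In c Phi -> forall a, In a (cvars c) -> xi a = xi' a) -> model J xi' Phi.
Proof.
  unfold model; intros. specialize (H c H1). specialize (H0 c H1). destruct c; simpl in *.
  - rewrite <- (isub_ext IVar (xis xi) IVar (xis xi') a), <- (isub_ext IVar (xis xi) IVar (xis xi') b);
    auto; intros; unfold xis; rewrite H0; auto using in_or_app.
  - rewrite <- H0; auto.
Qed.

Lemma subt_inv : forall J s1 s2, subt J s1 s2 -> wft s1 -> wft s2 ->
  exists s1' s2', aeq s1 s1' /\ aeq s2 s2' /\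
  exists is r1 r2, s1' = TAll is r1 /\ inst s2' r2 /\ subm J r1 r2 /\
     (forall i, In i is -> ~ In i (tfv s2')).
Proof.
  intros J s1 s2 HS; induction HS; intros.
  - exists (TAll is r1), s2. split; [apply (proj2 sub_refl); auto|].
    split; [apply (proj2 sub_refl); auto|]. eauto 10.
  - destruct IHHS as [s1'' [s2'' [A1 [A2 P]]]]; [eapply tsubst_wf; eauto|eapply tsubst_wf; eauto|].
    exists s1'', s2''. split; [eapply aeq_trans; eauto|]. split; [eapply aeq_trans; eauto|]. auto.
Qed.

Fixpoint msize (r : mono) : nat :=
  match r with TBase _ _ => 1 | TProd a b => S (msize a + msize b) | TArr s r => S (tsize s + msize r) end
with tsize (s : ty) : nat := match s with TAll _ r => S (msize r) end.

Lemma sub_size :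
  (forall th ths r r', msubst th ths r r' -> msize r' = msize r) /\
  (forall th ths s s', tsubst th ths s s' -> tsize s' = tsize s).
Proof. apply msubst_mut; simpl; intros; auto. Qed.

Lemma upd_IVar_form : forall js ks x, exists k, upd IVar js (map IVar ks) x = IVar k.
Proof.
  induction js; destruct ks; simpl; eauto. intros. destruct (x =? a); eauto.
Qed.

Definition restr (xi : sosubst) (S : list nat) : sosubst :=
  fun a => if in_dec Nat.eq_dec a S then xi a else None.
Definition merge (x1 x2 : sosubst) : sosubst :=
  fun a => match x1 a with Some t => Some t | None => x2 a end.

Definition Res J (xi : sosubst) N S Phi V := exists xi', is_sosubst xi' /\
  (forall a t, xi a = Some t -> xi' a = Some t) /\ (forall a, xi' a <> None <-> In a V) /\
  model J xi' Phi /\ exists M, forall a, In a V -> In a S \/ (N <= a /\ a < M).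

Lemma combine_res : forall J xi N S S1 S2 Phi1 V1 Phi2 V2 M1,
 (forall a, In a S <-> In a S1 \/ In a S2) ->
 (forall a, In a S -> a < N) ->
 (forall a, In a S -> xi a <> None) ->
 (forall a, xi a <> None -> In a S) ->
 (forall c, In c Phi1 -> forall a, In a (cvars c) -> In a V1) ->
 (forall c, In c Phi2 -> forall a, In a (cvars c) -> In a V2) ->
 (exists xi1, is_sosubst xi1 /\ (forall a t, restr xi S1 a = Some t -> xi1 a = Some t) /\
    (forall a, xi1 a <> None <-> In a V1) /\ model J xi1 Phi1 /\
    forall a, In a V1 -> In a S1 \/ (N <= a /\ a < M1)) ->
 Res J (restr xi S2) (max N M1) S2 Phi2 V2 ->
 (forall S', (forall a, In a S' <-> In a S) -> shared_ok V1 V2 S') /\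
 Res J xi N S (Phi1 ++ Phi2) (V1 ++ V2).
Proof.
  intros J xi N S S1 S2 Phi1 V1 Phi2 V2 M1 HS HN Hdef Hdom HP1 HP2
    [xi1 [I1 [E1 [D1 [Mo1 K1]]]]] [xi2 [I2 [E2 [D2 [Mo2 [M2 K2]]]]]].
  assert (SH : forall a, In a V1 -> In a V2 -> In a S).
  { intros a Ha1 Ha2. destruct (K1 a Ha1) as [Ha|Ha]; [apply HS; auto|].
    destruct (K2 a Ha2) as [Hb|Hb]; [apply HS; auto|lia]. }
  assert (R1 : forall a, In a S -> In a V1 -> In a S1).
  { intros a Ha Hv. destruct (K1 a Hv); auto. specialize (HN a Ha). lia. }
  assert (R2 : forall a, In a S -> In a V2 -> In a S2).
  { intros a Ha Hv. destruct (K2 a Hv); auto. specialize (HN a Ha). lia. }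
  assert (X1 : forall a t, In a S1 -> xi a = Some t -> xi1 a = Some t).
  { intros. apply E1. unfold restr. destruct (in_dec Nat.eq_dec a S1); tauto. }
  assert (X2 : forall a t, In a S2 -> xi a = Some t -> xi2 a = Some t).
  { intros. apply E2. unfold restr. destruct (in_dec Nat.eq_dec a S2); tauto. }
  split.
  - intros S' HS' a H1 H2. apply HS'. auto.
  - exists (merge xi1 xi2). split; [|split; [|split; [|split]]].
    + intros a t. unfold merge. destruct (xi1 a) eqn:E. intros [=<-]; eapply I1; eauto. apply I2.
    + intros a t Ht. assert (Ha : In a S) by (apply Hdom; congruence).
      unfold merge. destruct (xi1 a) eqn:E.
      * assert (In a V1) by (apply D1; congruence). rewrite (X1 a t) in E; auto.
      * apply HS in Ha. destruct Ha as [Ha|Ha]. rewrite (X1 a t) in E; auto; discriminate.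
        apply X2; auto.
    + intros a. unfold merge. rewrite in_app_iff, <- D1, <- D2. destruct (xi1 a) eqn:E.
      * split; intros; [left; congruence|congruence].
      * split; intros H. right; auto. destruct H as [H|H]; [congruence|auto].
    + intros c Hc. apply in_app_or in Hc. destruct Hc as [Hc|Hc].
      * refine (model_ext J xi1 _ Phi1 Mo1 _ c Hc). intros c' Hc' a Ha. assert (In a V1) by eauto.
        apply D1 in H. unfold merge. destruct (xi1 a); congruence.
      * refine (model_ext J xi2 _ Phi2 Mo2 _ c Hc). intros c' Hc' a Ha. assert (Hv2 : In a V2) by eauto.
        unfold merge. destruct (xi1 a) eqn:E; auto.
        assert (Hv1 : In a V1) by (apply D1; congruence).
        assert (Ha' : In a S) by auto.
        destruct (xi a) as [u|] eqn:Ex; [|exfalso; eapply Hdef; eauto].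
        rewrite (X1 a u) in E by auto. rewrite (X2 a u); auto.
    + exists (max M1 M2). intros a Ha. apply in_app_or in Ha. destruct Ha as [Ha|Ha].
      * destruct (K1 a Ha); [left; apply HS; auto|right; lia].
      * destruct (K2 a Ha); [left; apply HS; auto|right; lia].
Qed.

Definition CM n := forall J xi r1 r2 r1' r2' N, msize r1 + msize r2 <= n -> wfm r1 -> wfm r2 ->
  is_sosubst xi -> (forall a, xi a <> None -> In a (msv r1 ++ msv r2)) ->
  (forall a, In a (msv r1 ++ msv r2) -> a < N) ->
  msubst IVar (xis xi) r1 r1' -> msubst IVar (xis xi) r2 r2' -> subm J r1' r2' ->
  exists Phi V, inferm Phi r1 r2 V /\ Res J xi N (msv r1 ++ msv r2) Phi V.

Definition CT n := forall J xi s1 s2 s1' s2' N, tsize s1 + tsize s2 <= n -> wft s1 -> wft s2 ->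
  is_sosubst xi -> (forall a, xi a <> None -> In a (tsv s1 ++ tsv s2)) ->
  (forall a, In a (tsv s1 ++ tsv s2) -> a < N) ->
  tsubst IVar (xis xi) s1 s1' -> tsubst IVar (xis xi) s2 s2' -> subt J s1' s2' ->
  exists Phi V, infert Phi s1 s2 V /\ Res J xi N (tsv s1 ++ tsv s2) Phi V.

Lemma xis_restr : forall xi S a, In a S -> xis (restr xi S) a = xis xi a.
Proof. intros. unfold xis, restr. destruct (in_dec Nat.eq_dec a S); tauto. Qed.

Lemma restr_so : forall xi S, is_sosubst xi -> is_sosubst (restr xi S).
Proof. unfold is_sosubst, restr. intros. destruct (in_dec Nat.eq_dec a S); eauto. discriminate. Qed.

Lemma restr_dom : forall xi S a, restr xi S a <> None -> In a S.
Proof. unfold restr. intros. destruct (in_dec Nat.eq_dec a S); tauto. Qed.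

Lemma msubst_restr : forall xi S r r', msubst IVar (xis xi) r r' ->
  (forall a, In a (msv r) -> In a S) -> msubst IVar (xis (restr xi S)) r r'.
Proof. intros. eapply msubst_ext; eauto. intros. rewrite xis_restr; auto. Qed.

Lemma tsubst_restr : forall xi S r r', tsubst IVar (xis xi) r r' ->
  (forall a, In a (tsv r) -> In a S) -> tsubst IVar (xis (restr xi S)) r r'.
Proof. intros. eapply tsubst_ext; eauto. intros. rewrite xis_restr; auto. Qed.

Lemma CM_step : forall n, CM n -> CT n -> CM (S n).
Proof.
  intros n IHM IHT J xi r1 r2 r1' r2' N Hsz W1 W2 Hso Hdom HN S1 S2 Hsub.
  assert (Hdef : forall a, In a (msv r1 ++ msv r2) -> xi a <> None).
  { destruct (proj1 (nosv J) _ _ Hsub) as [Z1 Z2]. intros a Ha. apply in_app_or in Ha.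
    destruct Ha; [eapply defined_all; [exact S1|exact Z1|auto]|eapply defined_all; [exact S2|exact Z2|auto]]. }
  destruct r1 as [B a|a1 a2|s1 q1]; destruct r2 as [B' b|b1 b2|s2 q2];
    inversion S1; subst; inversion S2; subst; inversion Hsub; subst.
  -
    exists [CLe a b], (isv a ++ isv b). split; [constructor|].
    exists xi. split; auto. split; auto. split; [|split].
    + intros x; split; [apply Hdom|apply Hdef].
    + intros c [<-|[]]. simpl. auto.
    + exists N. intros; left; auto.
  -
    simpl in W1, W2. destruct W1 as [Wa1 Wa2]. destruct W2 as [Wb1 Wb2].
    match goal with H : msubst _ _ a1 ?x |- _ => rename x into a1'; rename H into Sa1 end.
    match goal with H : msubst _ _ a2 ?x |- _ => rename x into a2'; rename H into Sa2 end.
    match goal with H : msubst _ _ b1 ?x |- _ => rename x into b1'; rename H into Sb1 end.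
    match goal with H : msubst _ _ b2 ?x |- _ => rename x into b2'; rename H into Sb2 end.
    set (T1 := msv a1 ++ msv b1). set (T2 := msv a2 ++ msv b2).
    destruct (IHM J (restr xi T1) a1 b1 a1' b1' N) as [Phi1 [V1 [D1 R1]]]; simpl in Hsz; try lia; auto.
    { exact (restr_so _ _ Hso). } { intros; eapply restr_dom; eauto. }
    { intros; apply HN; simpl; unfold T1 in *; rewrite !in_app_iff in *; tauto. }
    { apply msubst_restr; auto. intros; unfold T1; apply in_or_app; auto. }
    { apply msubst_restr; auto. intros; unfold T1; apply in_or_app; auto. }
    destruct R1 as [xi1 [I1 [E1 [Do1 [Mo1 [M1 K1]]]]]].
    destruct (IHM J (restr xi T2) a2 b2 a2' b2' (max N M1)) as [Phi2 [V2 [D2 R2]]]; try lia; auto.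
    { exact (restr_so _ _ Hso). } { intros; eapply restr_dom; eauto. }
    { intros. assert (a < N); [|lia]. apply HN; simpl; unfold T2 in *; rewrite !in_app_iff in *; tauto. }
    { apply msubst_restr; auto. intros; unfold T2; apply in_or_app; auto. }
    { apply msubst_restr; auto. intros; unfold T2; apply in_or_app; auto. }
    assert (HSi : forall a, In a (msv (TProd a1 a2) ++ msv (TProd b1 b2)) <-> In a T1 \/ In a T2)
      by (intros; unfold T1, T2; simpl; rewrite !in_app_iff; tauto).
    destruct (combine_res J xi N (msv (TProd a1 a2) ++ msv (TProd b1 b2)) T1 T2 Phi1 V1 Phi2 V2 M1 HSi HN Hdef Hdom
      (proj2 (proj1 infer_V _ _ _ _ D1)) (proj2 (proj1 infer_V _ _ _ _ D2))
      (ex_intro _ xi1 (conj I1 (conj E1 (conj Do1 (conj Mo1 K1))))) R2) as [Sh Rs].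
    exists (Phi1 ++ Phi2), (V1 ++ V2). split; auto. constructor; auto.
    apply Sh. intros; simpl; rewrite !in_app_iff; tauto.
  -
    simpl in W1, W2. destruct W1 as [Wa1 Wa2]. destruct W2 as [Wb1 Wb2].
    match goal with H : tsubst _ _ s1 ?x |- _ => rename x into s1'; rename H into Sa1 end.
    match goal with H : msubst _ _ q1 ?x |- _ => rename x into q1'; rename H into Sa2 end.
    match goal with H : tsubst _ _ s2 ?x |- _ => rename x into s2'; rename H into Sb1 end.
    match goal with H : msubst _ _ q2 ?x |- _ => rename x into q2'; rename H into Sb2 end.
    set (T1 := tsv s2 ++ tsv s1). set (T2 := msv q1 ++ msv q2).
    destruct (IHT J (restr xi T1) s2 s1 s2' s1' N) as [Phi1 [V1 [D1 R1]]]; simpl in Hsz; try lia; auto.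
    { exact (restr_so _ _ Hso). } { intros; eapply restr_dom; eauto. }
    { intros; apply HN; simpl; unfold T1 in *; rewrite !in_app_iff in *; tauto. }
    { apply tsubst_restr; auto. intros; unfold T1; apply in_or_app; auto. }
    { apply tsubst_restr; auto. intros; unfold T1; apply in_or_app; auto. }
    destruct R1 as [xi1 [I1 [E1 [Do1 [Mo1 [M1 K1]]]]]].
    destruct (IHM J (restr xi T2) q1 q2 q1' q2' (max N M1)) as [Phi2 [V2 [D2 R2]]]; try lia; auto.
    { exact (restr_so _ _ Hso). } { intros; eapply restr_dom; eauto. }
    { intros. assert (a < N); [|lia]. apply HN; simpl; unfold T2 in *; rewrite !in_app_iff in *; tauto. }
    { apply msubst_restr; auto. intros; unfold T2; apply in_or_app; auto. }
    { apply msubst_restr; auto. intros; unfold T2; apply in_or_app; auto. }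
    assert (HSi : forall a, In a (msv (TArr s1 q1) ++ msv (TArr s2 q2)) <-> In a T1 \/ In a T2)
      by (intros; unfold T1, T2; simpl; rewrite !in_app_iff; tauto).
    destruct (combine_res J xi N (msv (TArr s1 q1) ++ msv (TArr s2 q2)) T1 T2 Phi1 V1 Phi2 V2 M1 HSi HN Hdef Hdom
      (proj2 (proj2 infer_V _ _ _ _ D1)) (proj2 (proj1 infer_V _ _ _ _ D2))
      (ex_intro _ xi1 (conj I1 (conj E1 (conj Do1 (conj Mo1 K1))))) R2) as [Sh Rs].
    exists (Phi1 ++ Phi2), (V1 ++ V2). split; auto. constructor; auto.
    apply Sh. intros; simpl; rewrite !in_app_iff; tauto.
Qed.

Lemma CT_step : forall n, CM n -> CT (S n).
Proof.
  intros n IHM J xi rho tau rho' tau' N Hsz W1 W2 Hso Hdom HN S1 S2 Hsub.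
  destruct rho as [is r1]; destruct tau as [js r2].
  destruct (subt_inv J _ _ Hsub (tsubst_wf _ _ _ _ S1 W1) (tsubst_wf _ _ _ _ S2 W2))
    as [s1'' [s2'' [A1 [A2 [is' [r1x [R [-> [Hinst [Hsm Hfr]]]]]]]]]].
  pose proof (tsubst_aeq _ _ _ _ _ S1 A1) as S1'.
  pose proof (tsubst_aeq _ _ _ _ _ S2 A2) as S2'.
  clear S1 S2 A1 A2 Hsub rho' tau'.
  inversion S1'; subst.
  match goal with H : msubst _ _ r1 r1x |- _ => rename H into Hr1x end.
  match goal with H : length is' = length is |- _ => rename H into Lk end.
  match goal with H : NoDup is' |- _ => rename H into NDk end.
  match goal with H : forall k x, In k is' -> In x (tfv _) -> _ |- _ => rename H into Hf1 end.
  match goal with H : forall k a, In k is' -> In a (msv r1) -> _ |- _ => rename H into Hf2 end.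
  destruct s2'' as [ks2 r2t].
  inversion S2'; subst.
  match goal with H : msubst _ _ r2 r2t |- _ => rename H into Hr2t end.
  match goal with H : length ks2 = length js |- _ => rename H into Lk2 end.
  match goal with H : NoDup ks2 |- _ => rename H into NDk2 end.
  match goal with H : forall k x, In k ks2 -> In x (tfv _) -> _ |- _ => rename H into Hg1 end.
  match goal with H : forall k a, In k ks2 -> In a (msv r2) -> _ |- _ => rename H into Hg2 end.
  simpl in Hinst. destruct Hinst as [as_ [Las HR]].
  destruct W1 as [ND1 [Ar1 Wr1]]. destruct W2 as [ND2 [Ar2 Wr2]].
  destruct (proj1 (nosv J) _ _ Hsm) as [Z1 Z2].
  assert (Z2t : forall a, ~ In a (msv r2t)).
  { intros a Ha. apply (Z2 a). apply (svm _ _ _ _ HR). right. exists a. simpl; auto. }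
  assert (Hdef1 : forall a, In a (msv r1) -> xi a <> None) by (eapply defined_all; eauto).
  assert (Hdef2 : forall a, In a (msv r2) -> xi a <> None) by (eapply defined_all; eauto).
  assert (HN' : forall a, In a (msv r1) \/ In a (msv r2) -> a < N).
  { intros; apply HN; simpl; apply in_or_app; auto. }
  set (L := length js). set (alphas := seq N L).
  destruct (msubst_ex r1 (upd IVar is (map IVar is')) SVar) as [r1a Hr1a].
  destruct (msubst_ex r2 (upd IVar js (map SVar alphas)) SVar) as [r2' Hr2'].
  set (xi_full := fun a => if a <? N then xi a else if a - N <? L then Some (nth (a - N) as_ IZero) else None).
  set (xi_in := fun a => if a <? N then xi a else
                 if in_dec Nat.eq_dec a (msv r2') then xi_full a else None).
  assert (Xlt : forall a, a < N -> xis xi_in a = xis xi a /\ xis xi_full a = xis xi a /\ xi_in a = xi a).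
  { intros. unfold xis, xi_in, xi_full. destruct (Nat.ltb_spec a N); [auto|lia]. }
  assert (map_full : map (xis xi_full) alphas = as_).
  { apply nth_ext with (d := xis xi_full 0) (d' := IZero).
    - rewrite length_map. unfold alphas. rewrite length_seq. unfold L. congruence.
    - intros m Hm. rewrite length_map in Hm. unfold alphas in *. rewrite length_seq in Hm.
      rewrite map_nth. rewrite seq_nth by auto. unfold xis, xi_full.
      destruct (Nat.ltb_spec (N + m) N); [lia|]. destruct (Nat.ltb_spec (N + m - N) L); [|lia].
      f_equal. lia. }
  assert (F_full : msubst IVar (xis xi_full) r2' R).
  { pose proof (msubst_comp _ _ _ _ Hr2t _ _ _ HR) as HC.
    eapply msubst_fact; [exact Hr2'|exact HC| |].
    - intros x Hx. unfold cth. rewrite !upd_map. rewrite !map_map. simpl.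
      rewrite upd_self by (auto; congruence). change (map (fun x0 : nat => xis xi_full x0) alphas) with (map (xis xi_full) alphas). rewrite map_full.
      apply upd_ext_out; [congruence|]. intros Hn.
      apply upd_notin. intros Hk. apply (Hg1 x x Hk); [apply In_tfv; auto|simpl; auto].
    - intros a Ha. unfold cth. simpl. destruct (Xlt a) as [_ [-> _]]; [apply HN'; auto|].
      rewrite <- (isub_id (xis xi a)) at 2. apply isub_ext; auto.
      intros y Hy. apply upd_notin. intros Hk. eapply Hg2; eauto. }
  assert (F_in : msubst IVar (xis xi_in) r2' R).
  { eapply msubst_ext; [exact F_full| |]; auto. intros a Ha.
    destruct (Nat.ltb_spec a N) as [Hlt|Hge].
    - destruct (Xlt a Hlt) as [X1 [X2 _]]. congruence.
    - unfold xis, xi_in. destruct (Nat.ltb_spec a N); [lia|].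
      destruct (in_dec Nat.eq_dec a (msv r2')); [reflexivity|contradiction]. }
  assert (F_1 : msubst IVar (xis xi_in) r1a r1x).
  { eapply msubst_fact; [exact Hr1a|exact Hr1x| |].
    - intros x Hx. destruct (upd_IVar_form is is' x) as [k ->]. reflexivity.
    - intros a Ha. simpl. destruct (Xlt a) as [-> _]; auto. }
  assert (svr1a : forall b, In b (msv r1a) <-> In b (msv r1)).
  { intros b. rewrite (svm _ _ _ _ Hr1a). split.
    - intros [[x [_ Hb]]|[a [Ha [<-|[]]]]]; auto.
      destruct (upd_IVar_form is is' x) as [k E]. rewrite E in Hb. destruct Hb.
    - intros Hb. right. exists b. simpl; auto. }
  assert (svr2' : forall b, In b (msv r2') -> In b (msv r2) \/ (N <= b /\ b < N + L)).
  { intros b Hb. apply (svm _ _ _ _ Hr2') in Hb. destruct Hb as [[x [_ Hb]]|[a [Ha [<-|[]]]]]; auto.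
    destruct (in_dec Nat.eq_dec x js).
    - assert (In (upd IVar js (map SVar alphas) x) (map SVar alphas)).
      { apply upd_in_range; auto. rewrite length_map. unfold alphas. rewrite length_seq. auto. }
      apply in_map_iff in H. destruct H as [c [Ec Hc]]. rewrite <- Ec in Hb.
      destruct Hb as [<-|[]]. unfold alphas in Hc. apply in_seq in Hc. right; lia.
    - rewrite upd_notin in Hb by auto. destruct Hb. }
  assert (svr2r : forall b, In b (msv r2) -> In b (msv r2')).
  { intros b Hb. apply (svm _ _ _ _ Hr2'). right. exists b. simpl; auto. }
  assert (Iso : is_sosubst xi_in).
  { intros a t Et. pose proof Et as Et'. unfold xi_in in Et. destruct (a <? N); [eapply Hso; eauto|].
    destruct (in_dec Nat.eq_dec a (msv r2')) as [Hin|]; [|discriminate].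
    destruct (isv t) as [|b l] eqn:Eb; auto. exfalso. apply (Z2 b).
    apply (svm _ _ _ _ F_in). right. exists a. split; auto. unfold xis. rewrite Et'. rewrite Eb. left; auto. }
  destruct (IHM J xi_in r1a r2' r1x R (N + L)) as [Phi [V [D Rs]]].
  { rewrite (proj1 sub_size _ _ _ _ Hr1a), (proj1 sub_size _ _ _ _ Hr2'). simpl in Hsz. lia. }
  { eapply msubst_wf; eauto. }
  { eapply msubst_wf; eauto. }
  { exact Iso. }
  { intros a Ha. rewrite in_app_iff. unfold xi_in in Ha. destruct (Nat.ltb_spec a N).
    - apply Hdom in Ha. simpl in Ha. apply in_app_or in Ha. rewrite svr1a. destruct Ha; auto.
    - destruct (in_dec Nat.eq_dec a (msv r2')); tauto. }
  { intros a Ha. apply in_app_or in Ha. destruct Ha as [Ha|Ha].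
    - apply svr1a in Ha. assert (a < N) by auto. lia.
    - destruct (svr2' a Ha) as [Hb|Hb]; [assert (a < N) by auto; lia|lia]. }
  { exact F_1. }
  { exact F_in. }
  { exact Hsm. }
  destruct Rs as [xi2 [I2 [E2 [Do2 [Mo2 [M2 K2]]]]]].
  destruct (proj1 infer_V _ _ _ _ D) as [VV _].
  exists (Phi ++ notin_cs is' r1a ++ notin_cs is' r2), (V ++ msv r1a ++ msv r2). split.
  - apply inf_alpha with (s1' := TAll is' r1a) (s2' := TAll js r2).
    + apply ts_all; auto.
    + apply (proj2 sub_refl). simpl; auto.
    + apply (inf_all Phi is' r1a js r2 alphas r2' V); auto.
      * unfold alphas. apply length_seq.
      * unfold alphas. apply seq_NoDup.
      * intros a Ha. unfold alphas in Ha. apply in_seq in Ha. split; intros Hb.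
        -- apply svr1a in Hb. assert (a < N) by auto. lia.
        -- assert (a < N) by auto. lia.
      * intros i Hi Ht. apply (Hfr i Hi). apply (fvt _ _ _ _ S2'). left. exists i. simpl; auto.
  - exists xi2. split; [auto|split; [|split; [|split]]].
    + intros a t Et. apply E2. assert (a < N).
      { apply HN. apply Hdom. congruence. }
      destruct (Xlt a H) as [_ [_ ->]]. auto.
    + intros a. rewrite Do2. rewrite !in_app_iff. split; [tauto|].
      intros [H|[H|H]]; auto; apply VV; auto.
    + intros c Hc. rewrite !in_app_iff in Hc. destruct Hc as [Hc|[Hc|Hc]].
      * apply Mo2; auto.
      * apply in_notin_cs_inv in Hc. destruct Hc as [k [a [-> [Hk Ha]]]]. simpl.
        apply svr1a in Ha. destruct (xi a) as [t|] eqn:Et; [|exfalso; eapply Hdef1; eauto].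
        exists t. split. apply E2. destruct (Xlt a) as [_ [_ ->]]; auto.
        specialize (Hf2 k a Hk Ha). unfold xis in Hf2. rewrite Et in Hf2. auto.
      * apply in_notin_cs_inv in Hc. destruct Hc as [k [a [-> [Hk Ha]]]]. simpl.
        destruct (xi a) as [t|] eqn:Et; [|exfalso; eapply Hdef2; eauto].
        exists t. split. apply E2. destruct (Xlt a) as [_ [_ ->]]; auto.
        intros Hkt. apply (Hfr k Hk). apply (fvt _ _ _ _ S2'). right. exists a. split; auto.
        unfold xis; rewrite Et; auto.
    + exists (max M2 (N + L)). intros a Ha. simpl. rewrite in_app_iff.
      repeat rewrite in_app_iff in Ha. destruct Ha as [Ha|[Ha|Ha]].
      * destruct (K2 a Ha) as [Hb|Hb]; [|right; lia]. apply in_app_or in Hb. destruct Hb as [Hb|Hb].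
        -- left; left; apply svr1a; auto.
        -- destruct (svr2' a Hb) as [Hc|Hc]; [left; right; auto|right; lia].
      * left; left; apply svr1a; auto.
      * left; right; auto.
Qed.
Lemma comp_all : forall n, CM n /\ CT n.
Proof.
  induction n.
  - split.
    + intros J xi r1 r2 r1' r2' N Hsz. destruct r1; simpl in Hsz; lia.
    + intros J xi s1 s2 s1' s2' N Hsz. destruct s1; simpl in Hsz; lia.
  - split; [apply CM_step; tauto|apply CT_step; tauto].
Qed.

Theorem mainTheorem12 :
  (* (1) Soundness *)
  (forall (Phi : socp) (rho tau : ty) (V : list nat),
     wft rho -> wft tau ->
     infert Phi rho tau V ->
     forall (J : interp) (xi : sosubst),
       is_sosubst xi -> model J xi Phi ->
       forall rho' tau',
         tsubst IVar (xis xi) rho rho' ->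
         tsubst IVar (xis xi) tau tau' ->
         subt J rho' tau')
  /\
  (* (2) Completeness *)
  (forall (J : interp) (xi : sosubst) (rho tau rho' tau' : ty),
     wft rho -> wft tau ->
     is_sosubst xi ->
     (forall a, xi a <> None -> In a (tsv rho ++ tsv tau)) ->
     tsubst IVar (xis xi) rho rho' ->
     tsubst IVar (xis xi) tau tau' ->
     subt J rho' tau' ->
     exists (Phi : socp) (V : list nat),
       infert Phi rho tau V /\
       exists xi' : sosubst,
         is_sosubst xi' /\
         (forall a t, xi a = Some t -> xi' a = Some t) /\
         (forall a, xi' a <> None <-> In a V) /\
         model J xi' Phi).
Proof.
  split.
  - intros Phi rho tau V W1 W2 D J xi Hso Hm rho' tau' S1 S2.
    exact (proj2 soundness_mut _ _ _ _ D W1 W2 J xi Hm _ _ S1 S2).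
  - intros J xi rho tau rho' tau' W1 W2 Hso Hdom S1 S2 Hsub.
    assert (Hb : forall a, In a (tsv rho ++ tsv tau) -> a < S (list_max (tsv rho ++ tsv tau))).
    { intros a Ha. pose proof (proj1 (list_max_le (tsv rho ++ tsv tau) _) (le_n _)) as HF.
      rewrite Forall_forall in HF. specialize (HF a Ha). lia. }
    destruct (proj2 (comp_all (tsize rho + tsize tau)) J xi rho tau rho' tau' _ (le_n _)
      W1 W2 Hso Hdom Hb S1 S2 Hsub) as [Phi [V [D [xi' [I [E [Do [Mo _]]]]]]]].
    exists Phi, V. split; auto. exists xi'; auto.
Qed.
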